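(* Let $\|\cdot\|$ be a norm on $\mathbb{R}^d$ with $\|x\|\le\mu\|x\|_2$ for all $x$, and let $T:\mathbb{R}^d\to\mathbb{R}^d$ be a $\gamma$-contraction ($\gamma\in(0,1)$) with unique fixed point $x^*$. Let $\tilde T(x,\xi)$, $\xi\sim\mathcal{D}_x$, be a stochastic oracle with $\mathbb{E}(\tilde T(x,\xi))=Tx$ and $\sup_x\mathbb{E}(\|\tilde T(x,\xi)-Tx\|_2^2)\le\sigma^2$. Let $\varepsilon>0$ and $N=\left\lceil\frac{\|x^0-x^*\|+2\mu\sigma}{\varepsilon(1-\gamma)}\right\rceil$. Consider the stochastic Halpern method: for $n=1,\dots,N$, draw $k_n$ independent samples $\xi_{n,1},\dots,\xi_{n,k_n}\sim\mathcal{D}_{x^{n-1}}$ and set $x^n=(1-\beta_n)x^0+\beta_n\frac{1}{k_n}\sum_{j=1}^{k_n}\tilde T(x^{n-1},\xi_{n,j})$, with $\beta_n=\frac{n}{n+1}$ and $k_n=\lceil n^2\gamma^{N-n}\rceil$. Then the returned $x^N$ satisfies $\mathbb{E}(\|x^N-x^*\|)\le\varepsilon$, and the method uses at most $O\!\left(\frac{\|x^0-x^*\|^2+\mu^2\sigma^2}{\varepsilon^2(1-\gamma)^3}\right)$ queries to $\tilde T$.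
   Context: $\|\cdot\|_2$ is the Euclidean norm; the number of queries is $\sum_{n=1}^N k_n$. *)

(* Defs.v *)
From HB Require Import structures.
From mathcomp Require Import all_boot all_order all_algebra.
From mathcomp Require Import all_classical all_reals all_analysis.
From mathcomp Require Import measurable_realfun.
Set Implicit Arguments. Unset Strict Implicit. Unset Printing Implicit Defensive.
Import Order.TTheory GRing.Theory Num.Theory.
Import numFieldNormedType.Exports.
Local Open Scope classical_set_scope.
Local Open Scope ring_scope.

(* For measurability we transport
   to d.-tuple R, which MathComp-Analysis equips with the product (= Borel)
   sigma-algebra generated by the coordinate projections. *)
Definition tup_of_rV (R : realType) (d : nat) (x : 'rV[R]_d) : d.-tuple R :=
  [tuple x ord0 i | i < d].
Definition rV_of_tup (R : realType) (d : nat) (t : d.-tuple R) : 'rV[R]_d :=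
  \row_i tnth t i.

Definition eucl (R : realType) (d : nat) (x : 'rV[R]_d) : R :=
  Num.sqrt (\sum_(i < d) x ord0 i ^+ 2).

Definition is_norm_Rd (R : realType) (d : nat) (nrm : 'rV[R]_d -> R) : Prop :=
  [/\ forall x, nrm x = 0 -> x = 0,
      forall (a : R) x, nrm (a *: x) = `|a| * nrm x
    & forall x y, nrm (x + y) <= nrm x + nrm y].

Definition gamma_contraction (R : realType) (d : nat) (nrm : 'rV[R]_d -> R)
  (gamma : R) (T : 'rV[R]_d -> 'rV[R]_d) : Prop :=
  0 < gamma < 1 /\ forall x y, nrm (T x - T y) <= gamma * nrm (x - y).

Definition ceil_nat (R : realType) (r : R) : nat := `|Num.ceil r|%N.

(* Expectation (of a nonnegative extended-real functional) over k independent
   samples xi_1, ..., xi_k ~ mu, as the iterated integral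
   \int mu(dxi_1) ... \int mu(dxi_k) h [:: xi_1; ...; xi_k]. *)
Fixpoint iid_int (dX : measure_display) (Xi : measurableType dX) (R : realType)
  (mu : probability Xi R) (k : nat) (h : seq Xi -> \bar R) : \bar R :=
  match k with
  | 0 => h [::]
  | k'.+1 => (\int[mu]_xi iid_int mu k' (fun s => h (xi :: s)))%E
  end.

Definition halpern_update (R : realType) (d : nat) (dX : measure_display)
  (Xi : measurableType dX) (Ttil : 'rV[R]_d -> Xi -> 'rV[R]_d)
  (x0 : 'rV[R]_d) (beta : nat -> R) (k : nat -> nat)
  (n : nat) (x : 'rV[R]_d) (s : seq Xi) : 'rV[R]_d :=
  (1 - beta n) *: x0 + beta n *: ((k n)%:R^-1 *: \sum_(xi <- s) Ttil x xi).

(* Expectation of f(x^{n+m-1}) for the stochastic Halpern chain started at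
   state x = x^{n-1} and run for iterations n, n+1, ..., n+m-1, where at
   iteration j a fresh batch of k_j independent samples is drawn from
   D (x^{j-1}).  (Ionescu-Tulcea / iterated-kernel form of the expectation.) *)
Fixpoint halpern_expect (R : realType) (d : nat) (dX : measure_display)
  (Xi : measurableType dX) (D : 'rV[R]_d -> probability Xi R)
  (Ttil : 'rV[R]_d -> Xi -> 'rV[R]_d) (x0 : 'rV[R]_d)
  (beta : nat -> R) (k : nat -> nat) (f : 'rV[R]_d -> \bar R)
  (m n : nat) (x : 'rV[R]_d) : \bar R :=
  match m with
  | 0 => f x
  | m'.+1 => iid_int (D x) (k n)
      (fun s => halpern_expect D Ttil x0 beta k f m' n.+1
                  (halpern_update Ttil x0 beta k n x s))
  end.

(* Main.v *)
Require Import Defs.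
From HB Require Import structures.
From mathcomp Require Import all_boot all_order all_algebra.
From mathcomp Require Import all_classical all_reals all_analysis.
From mathcomp Require Import measurable_realfun.
From mathcomp Require Import ring lra.
Import Order.TTheory GRing.Theory Num.Theory.
Import numFieldNormedType.Exports.
Local Open Scope classical_set_scope.
Local Open Scope ring_scope.

Lemma eucl_sq (R : realType) d (w : 'rV[R]_d) :
  eucl w ^+ 2 = \sum_(i < d) w ord0 i ^+ 2.
Proof. by rewrite /eucl sqr_sqrtr // sumr_ge0 // => i _; rewrite sqr_ge0. Qed.

Lemma eucl_ge0 (R : realType) d (w : 'rV[R]_d) : 0 <= eucl w.
Proof. exact: sqrtr_ge0. Qed.

Lemma eucl_sqD (R : realType) d (v y : 'rV[R]_d) :
  eucl (v + y) ^+ 2 = eucl v ^+ 2 + \sum_(i < d) (2 * v ord0 i) * y ord0 i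
     + eucl y ^+ 2.
Proof.
rewrite !eucl_sq -!big_split /=; apply: eq_bigr => i _; rewrite mxE; ring.
Qed.

Section Gen.
Context (dX : measure_display) (Xi : measurableType dX) (R : realType).
Local Open Scope ereal_scope.

Lemma le_int_nm (mu : {measure set Xi -> \bar R}) (f g : Xi -> \bar R) :
  (forall x, 0 <= f x) -> (forall x, f x <= g x) ->
  \int[mu]_x f x <= \int[mu]_x g x.
Proof.
move=> f0 fg.
have g0 : forall x, 0 <= g x by move=> x; exact: le_trans (f0 x) (fg x).
rewrite !ge0_integralTE //; apply: ereal_sup_le.
move=> _ [h hf <-]; exists h => //= x; exact: le_trans (hf x) (fg x).
Qed.

Lemma iid_int_ge0 (mu : probability Xi R) k h :
  (forall s, 0 <= h s) -> 0 <= iid_int mu k h.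
Proof.
elim: k h => [|k IH] h h0 /=; first exact: h0.
apply: integral_ge0 => x _; exact: IH.
Qed.

Lemma iid_int_le (mu : probability Xi R) k h1 h2 :
  (forall s, 0 <= h1 s) -> (forall s, size s = k -> h1 s <= h2 s) ->
  iid_int mu k h1 <= iid_int mu k h2.
Proof.
elim: k h1 h2 => [|k IH] h1 h2 h0 h12 /=; first exact: h12.
apply: le_int_nm => x; first by apply: iid_int_ge0.
apply: IH => // s Hs; apply: h12; by rewrite /= Hs.
Qed.
End Gen.

Section Step.
Context (dX : measure_display) (Xi : measurableType dX) (R : realType).
Context (d : nat) (mu : probability Xi R) (Y : Xi -> 'rV[R]_d) (sigma : R).
Hypothesis hYi : forall i, mu.-integrable setT (fun xi => (Y xi ord0 i)%:E).
Hypothesis hY0 : forall i, (\int[mu]_xi (Y xi ord0 i)%:E = 0)%E.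
Hypothesis hYv : (\int[mu]_xi (eucl (Y xi) ^+ 2)%:E <= (sigma ^+ 2)%:E)%E.

Let mYi i : measurable_fun setT (fun xi => Y xi ord0 i).
Proof. apply/measurable_EFinP; exact: (measurable_int _ (hYi i)). Qed.

Let mYv : measurable_fun setT (fun xi => eucl (Y xi) ^+ 2).
Proof.
have -> : (fun xi => eucl (Y xi) ^+ 2) = (fun xi => \sum_(i < d) Y xi ord0 i ^+ 2).
  by apply/funext => xi; rewrite eucl_sq.
apply: measurable_sum => i; exact: measurable_funX.
Qed.

Let iYv : mu.-integrable setT (fun xi => (eucl (Y xi) ^+ 2)%:E).
Proof.
apply/integrableP; split; first exact/measurable_EFinP.
under eq_integral do rewrite /= ger0_norm ?sqr_ge0 //.
apply: le_lt_trans hYv _; exact: ltry.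
Qed.

Lemma step_int (A B c : R) (v : 'rV[R]_d) : 0 <= B ->
  (\int[mu]_xi (A + B * (eucl (v + Y xi) ^+ 2 + c))%:E
    <= (A + B * (eucl v ^+ 2 + c + sigma ^+ 2))%:E)%E.
Proof.
move=> B0.
pose c0 := A + B * (eucl v ^+ 2 + c).
have E : forall xi, ((A + B * (eucl (v + Y xi) ^+ 2 + c))%:E =
   ((cst c0%:E xi) + (\sum_(i < d) ((B * (2 * v ord0 i))%:E * (Y xi ord0 i)%:E)))
     + (B%:E * (eucl (Y xi) ^+ 2)%:E))%E.
  move=> xi; under eq_bigr do rewrite -EFinM.
  rewrite /c0 /= sumEFin -EFinM -!EFinD; congr EFin.
  rewrite eucl_sqD.
  have -> : \sum_(i < d) B * (2 * v ord0 i) * Y xi ord0 i =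
     B * \sum_(i < d) 2 * v ord0 i * Y xi ord0 i.
    by rewrite mulr_sumr; apply: eq_bigr => i _; ring.
  ring.
under eq_integral => xi _ do rewrite E.
have i1 : mu.-integrable setT (fun xi => cst c0%:E xi).
  exact: finite_measure_integrable_cst.
have i2 : mu.-integrable setT
   (fun xi => (\sum_(i < d) ((B * (2 * v ord0 i))%:E * (Y xi ord0 i)%:E))%E).
  apply: (integrable_sum measurableT) => i _; exact: (integrableZl measurableT).
have i3 : mu.-integrable setT (fun xi => (B%:E * (eucl (Y xi) ^+ 2)%:E)%E).
  exact: (integrableZl measurableT).
rewrite (integralD measurableT); [|exact: (integrableD measurableT)|exact: i3].
rewrite (integralD measurableT i1 i2).
rewrite integral_cst //= probability_setT mule1.
rewrite (integral_sum measurableT); last by move=> i; exact: (integrableZl measurableT).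
rewrite big1 ?adde0; last by move=> i _; rewrite (integralZl measurableT) // hY0 mule0.
rewrite (integralZl measurableT) //.
rewrite (_ : A + B * (eucl v ^+ 2 + c + sigma ^+ 2) = c0 + B * sigma ^+ 2);
  last by rewrite /c0; ring.
rewrite [X in (_ <= X)%E]EFinD; apply: leeD2l; rewrite [X in (_ <= X)%E]EFinM; apply: lee_wpmul2l => //; by rewrite lee_fin.
Qed.

Lemma noise_bound k (A B : R) (v : 'rV[R]_d) : 0 <= A -> 0 <= B ->
  (iid_int mu k (fun s => (A + B * eucl (v + \sum_(xi <- s) Y xi) ^+ 2)%:E)
   <= (A + B * (eucl v ^+ 2 + k%:R * sigma ^+ 2))%:E)%E.
Proof.
move=> A0 B0; elim: k v => [|k IH] v /=.
  by rewrite big_nil addr0 mul0r addr0.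
apply: (le_trans _ (le_trans (step_int A B (k%:R * sigma ^+ 2) v B0) _)); last first.
  rewrite lee_fin -[k.+1]addn1 natrD mulrDl mul1r addrA.
  done.
apply: le_int_nm => xi.
  apply: iid_int_ge0 => s; rewrite lee_fin; apply: addr_ge0 => //.
  by apply: mulr_ge0 => //; rewrite sqr_ge0.
have -> : (fun s => (A + B * eucl (v + \sum_(xi0 <- xi :: s) Y xi0) ^+ 2)%:E) =
  (fun s => (A + B * eucl ((v + Y xi) + \sum_(xi0 <- s) Y xi0) ^+ 2)%:E).
  by apply/funext => s; rewrite big_cons addrA.
exact: IH.
Qed.
End Step.

Section Norm.
Context (R : realType) (d : nat) (nrm : 'rV[R]_d -> R).
Hypothesis hn : is_norm_Rd nrm.

Lemma nrmZ a x : nrm (a *: x) = `|a| * nrm x.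
Proof. by case: hn. Qed.
Lemma nrmD x y : nrm (x + y) <= nrm x + nrm y.
Proof. by case: hn. Qed.
Lemma nrm0 : nrm 0 = 0.
Proof. by rewrite -(scale0r (0 : 'rV[R]_d)) nrmZ normr0 mul0r. Qed.
Lemma nrm_ge0 x : 0 <= nrm x.
Proof.
have := nrmD x (- x); rewrite subrr nrm0 -scaleN1r nrmZ normrN normr1 mul1r.
lra.
Qed.
End Norm.
Arguments nrmZ {R d nrm}.
Arguments nrmD {R d nrm}.
Arguments nrm0 {R d nrm}.
Arguments nrm_ge0 {R d nrm}.

Definition betaH (R : realType) (n : nat) : R := n%:R / n.+1%:R.

Lemma betaH_ge0 (R : realType) n : 0 <= betaH R n.
Proof. by rewrite /betaH divr_ge0. Qed.
Lemma betaH_le1 (R : realType) n : betaH R n <= 1.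
Proof. by rewrite /betaH ler_pdivrMr ?ltr0Sn // mul1r ler_nat. Qed.

Fixpoint bnd (R : realType) (D0 gam : R) (e : nat -> R) (m n : nat) (r : R) : R :=
  match m with
  | 0 => r
  | m'.+1 => bnd R D0 gam e m' n.+1
      ((1 - betaH R n) * D0 + betaH R n * gam * r + betaH R n * e n)
  end.
Arguments bnd {R}.

Lemma bnd_affine (R : realType) (D0 gam : R) e m : 0 <= D0 -> 0 <= gam ->
  (forall n, 0 <= e n) -> forall n, exists a b, [/\ 0 <= a, 0 <= b &
    forall r, bnd D0 gam e m n r = a + b * r].
Proof.
move=> D00 g0 e0; elim: m => [|m IH] n /=.
  by exists 0, 1; split => // r; rewrite add0r mul1r.
have [a [b [a0 b0 hab]]] := IH n.+1.
have hb0 := betaH_ge0 R n; have hb1 := betaH_le1 R n.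
exists (a + b * ((1 - betaH R n) * D0 + betaH R n * e n)),
  (b * (betaH R n * gam)); split.
- apply: addr_ge0 => //; apply: mulr_ge0 => //; apply: addr_ge0.
    by apply: mulr_ge0 => //; lra.
  by apply: mulr_ge0 => //; exact: e0.
- by apply: mulr_ge0 => //; apply: mulr_ge0.
- by move=> r; rewrite hab; ring.
Qed.

Lemma amgm (R : realType) (E t : R) : 0 < t -> E <= t / 2 + E ^+ 2 / (2 * t).
Proof.
move=> t0.
have -> : t / 2 + E ^+ 2 / (2 * t) = E + (E - t) ^+ 2 / (2 * t).
  by field; rewrite gt_eqF.
rewrite lerDl divr_ge0 ?sqr_ge0 //; lra.
Qed.

Lemma eucl0 (R : realType) d : eucl (0 : 'rV[R]_d) = 0.
Proof. by rewrite /eucl big1 ?sqrtr0 // => i _; rewrite mxE expr0n. Qed.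

Definition G (R : realType) (q : R) m := \sum_(i < m) q ^+ i.
Arguments G {R}.

Lemma G_recr (R : realType) (q : R) m : G q m.+1 = G q m + q ^+ m.
Proof. by rewrite /G big_ord_recr. Qed.

Lemma G_ge0 (R : realType) (q : R) m : 0 <= q -> 0 <= G q m.
Proof. by move=> q0; rewrite /G sumr_ge0 // => i _; rewrite exprn_ge0. Qed.

Lemma G_bound (R : realType) (q : R) m : 0 <= q -> q < 1 -> G q m <= (1 - q)^-1.
Proof.
move=> q0 q1; elim: m => [|m IH].
  by rewrite /G big_ord0 invr_ge0; lra.
have -> : G q m.+1 = 1 + q * G q m.
  rewrite /G big_ord_recl expr0 mulr_sumr; congr (_ + _).
  by apply: eq_bigr => i _; rewrite lift0 exprS.
have -> : (1 - q)^-1 = 1 + q * (1 - q)^-1 by field; lra.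
by rewrite lerD2l; apply: ler_wpM2l.
Qed.

Lemma betaH_mul (R : realType) n : (n.+1)%:R * betaH R n = n%:R.
Proof. by rewrite /betaH mulrC divfK // pnatr_eq0. Qed.

Lemma betaH_mul1 (R : realType) n : (n.+1)%:R * (1 - betaH R n) = 1.
Proof. by rewrite mulrBr mulr1 betaH_mul -addn1 natrD addrAC subrr add0r. Qed.

Section Main.
Context (R : realType) (d : nat) (nrm : 'rV[R]_d -> R) (mu gamma : R)
  (T : 'rV[R]_d -> 'rV[R]_d) (xs : 'rV[R]_d) (dX : measure_display)
  (Xi : measurableType dX)
  (D : 'rV[R]_d -> probability Xi R) (Ttil : 'rV[R]_d -> Xi -> 'rV[R]_d)
  (sigma : R) (x0 : 'rV[R]_d).
Hypothesis hn : is_norm_Rd nrm.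
Hypothesis hmu : forall x, nrm x <= mu * eucl x.
Hypothesis hT : gamma_contraction nrm gamma T.
Hypothesis hxs : T xs = xs.
Hypothesis hunb : forall x (i : 'I_d),
     (D x).-integrable setT (fun xi => (Ttil x xi ord0 i)%:E) /\
     (\int[D x]_xi (Ttil x xi ord0 i)%:E = (T x ord0 i)%:E)%E.
Hypothesis hs0 : 0 <= sigma.
Hypothesis hvar : forall x,
  (\int[D x]_xi (eucl (Ttil x xi - T x) ^+ 2)%:E <= (sigma ^+ 2)%:E)%E.
Variable k : nat -> nat.
Hypothesis hk : forall n, (0 < n)%N -> (0 < k n)%N.
Variable sp : R.
Hypothesis hsp : sigma < sp.

Definition mup := Num.max mu 0.
Definition D0 := nrm (x0 - xs).
Definition en n := mup * sp / Num.sqrt (k n)%:R.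
Definition Y x xi := Ttil x xi - T x.

Lemma mup_ge0 : 0 <= mup.
Proof. by rewrite /mup le_max lexx orbT. Qed.

Lemma hmup x : nrm x <= mup * eucl x.
Proof.
apply: le_trans (hmu x) _; apply: ler_wpM2r; first exact: eucl_ge0.
by rewrite /mup le_max lexx.
Qed.

Lemma hYi x i : (D x).-integrable setT (fun xi => (Y x xi ord0 i)%:E).
Proof.
have -> : (fun xi => (Y x xi ord0 i)%:E) =
   (fun xi => ((Ttil x xi ord0 i)%:E - (EFin \o cst (T x ord0 i)) xi)%E).
  by apply/funext => xi; rewrite /Y !mxE.
apply: (integrableB measurableT); first exact: (hunb x i).1.
exact: finite_measure_integrable_cst.
Qed.

Lemma hY0 x i : (\int[D x]_xi (Y x xi ord0 i)%:E = 0)%E.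
Proof.
have -> : (fun xi => (Y x xi ord0 i)%:E) =
   (fun xi => ((Ttil x xi ord0 i)%:E - (EFin \o cst (T x ord0 i)) xi)%E).
  by apply/funext => xi; rewrite /Y !mxE.
rewrite (integralB measurableT); first last.
- exact: finite_measure_integrable_cst.
- exact: (hunb x i).1.
rewrite (hunb x i).2 /=.
rewrite (_ : (fun _ => _) = cst (T x ord0 i)%:E) //.
rewrite integral_cst //= probability_setT mule1 subee //.
Qed.

Lemma sumTtil x (s : seq Xi) :
  \sum_(xi <- s) Ttil x xi = \sum_(xi <- s) Y x xi + (size s)%:R *: T x.
Proof.
elim: s => [|a s IH]; first by rewrite !big_nil scale0r addr0.
rewrite !big_cons IH /= -[(size s).+1]addn1 natrD scalerDl scale1r /Y.
rewrite (addrC _ (T x)) [in RHS]addrA (addrAC (Ttil x a - T x)) subrK.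
by rewrite addrA.
Qed.


Lemma upd_bound n x (s : seq Xi) : (0 < n)%N -> size s = k n ->
  nrm (halpern_update Ttil x0 (betaH R) k n x s - xs) <=
  (1 - betaH R n) * D0 + betaH R n * gamma * nrm (x - xs)
  + betaH R n / (k n)%:R * mup * eucl (\sum_(xi <- s) Y x xi).
Proof.
move=> n0 hs.
have K0 : (k n)%:R != 0 :> R by rewrite pnatr_eq0 -lt0n hk.
have hb0 := betaH_ge0 R n; have hb1 := betaH_le1 R n.
have E : halpern_update Ttil x0 (betaH R) k n x s - xs =
  (1 - betaH R n) *: (x0 - xs) + betaH R n *: (T x - T xs)
  + (betaH R n / (k n)%:R) *: \sum_(xi <- s) Y x xi.
  rewrite /halpern_update sumTtil hs hxs; apply/rowP => i; rewrite !mxE.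
  by field.
rewrite E; apply: le_trans (nrmD hn _ _) _.
apply: lerD; last first.
  rewrite (nrmZ hn) ger0_norm ?divr_ge0 // -mulrA.
  by apply: ler_wpM2l; [rewrite divr_ge0|exact: hmup].
apply: le_trans (nrmD hn _ _) _.
rewrite !(nrmZ hn) !ger0_norm //; last by lra.
apply: lerD => //; rewrite -mulrA; apply: ler_wpM2l => //.
by case: hT => _; apply.
Qed.

Definition HE m n x := halpern_expect D Ttil x0 (betaH R) k
  (fun x => (nrm (x - xs))%:E) m n x.

Lemma HE_ge0 m n x : (0 <= HE m n x)%E.
Proof.
elim: m n x => [|m IH] n x /=; first by rewrite lee_fin (nrm_ge0 hn).
by apply: iid_int_ge0 => s; exact: IH.
Qed.

Lemma D0_ge0 : 0 <= D0. Proof. exact: nrm_ge0. Qed.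
Lemma gamma_ge0 : 0 <= gamma. Proof. by case: hT => /andP[/ltW]. Qed.
Lemma sp_gt0 : 0 < sp. Proof. exact: le_lt_trans hs0 hsp. Qed.
Lemma en_ge0 n : 0 <= en n.
Proof.
by rewrite /en divr_ge0 ?sqrtr_ge0 // mulr_ge0 ?mup_ge0 // ltW // sp_gt0.
Qed.

Lemma main_bound m : forall n x, (0 < n)%N ->
  (HE m n x <= (bnd D0 gamma en m n (nrm (x - xs)))%:E)%E.
Proof.
elim: m => [|m IH] n x n0; first by rewrite /HE /=.
rewrite /HE /=.
have [a [b [a0 b0 hab]]] := @bnd_affine R D0 gamma en m D0_ge0 gamma_ge0 en_ge0 n.+1.
have hb0 := betaH_ge0 R n; have hb1 := betaH_le1 R n.
have K0 : 0 < (k n)%:R :> R by rewrite ltr0n hk.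
set K := k n in K0 *.
set q := Num.sqrt (K%:R : R).
have q0 : 0 < q by rewrite sqrtr_gt0.
have hq2 : q ^+ 2 = K%:R by rewrite sqr_sqrtr // ltW.
set bn := betaH R n in hb0 hb1 *.
set r := nrm (x - xs).
have spp := sp_gt0.
pose P := (1 - bn) * D0 + bn * gamma * r.
pose Q := bn / K%:R * mup.
have P0 : 0 <= P.
  apply: addr_ge0; apply: mulr_ge0; rewrite ?D0_ge0 //; try lra.
    by apply: mulr_ge0 => //; exact: gamma_ge0.
  exact: nrm_ge0.
have Q0 : 0 <= Q by rewrite /Q mulr_ge0 ?mup_ge0 // divr_ge0 // ltW.
pose A' := a + b * (P + Q * (sp * q / 2)).
pose B' := b * (Q / (2 * (sp * q))).
have A'0 : 0 <= A'.
  apply: addr_ge0 => //; apply: mulr_ge0 => //; apply: addr_ge0 => //.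
  apply: mulr_ge0 => //; apply: divr_ge0; [apply: mulr_ge0|]; lra.
have B'0 : 0 <= B'.
  apply: mulr_ge0 => //; apply: divr_ge0 => //; apply: mulr_ge0; [lra|].
  apply: mulr_ge0; lra.
apply: le_trans (@iid_int_le _ _ _ (D x) K _
  (fun s => (A' + B' * eucl (0 + \sum_(xi <- s) Y x xi) ^+ 2)%:E) _ _) _.
- by move=> s; exact: HE_ge0.
- move=> s hs; apply: le_trans (IH n.+1 _ isT) _.
  rewrite lee_fin hab add0r.
  have hu := upd_bound n x s n0 hs.
  set E := eucl (\sum_(xi <- s) Y x xi) in hu *.
  have hE := @amgm R E (sp * q) (mulr_gt0 spp q0).
  apply: (@le_trans _ _ (a + b * (P + Q * E))).
    by rewrite lerD2l; apply: ler_wpM2l.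
  have -> : A' + B' * E ^+ 2 =
     a + b * (P + Q * (sp * q / 2 + E ^+ 2 / (2 * (sp * q)))).
    by rewrite /A' /B'; ring.
  rewrite lerD2l; apply: ler_wpM2l => //; rewrite lerD2l; exact: ler_wpM2l.
apply: le_trans (@noise_bound _ _ _ _ (D x) (Y x) sigma (hYi x) (hY0 x) (hvar x) K A' B' 0 A'0 B'0) _.
rewrite lee_fin eucl0 hab expr0n /= add0r.
have key : Q * (sp * q / 2) + Q / (2 * (sp * q)) * (K%:R * sigma ^+ 2)
    <= bn * en n.
  rewrite -subr_ge0 /Q /en -/K -/q -hq2.
  have -> : bn * (mup * sp / q) -
     (bn / q ^+ 2 * mup * (sp * q / 2) +
      bn / q ^+ 2 * mup / (2 * (sp * q)) * (q ^+ 2 * sigma ^+ 2)) =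
     bn * mup * (sp ^+ 2 - sigma ^+ 2) / (2 * sp * q).
    by field; rewrite ?gt_eqF.
  apply: divr_ge0; last by apply: mulr_ge0; lra.
  apply: mulr_ge0; first by apply: mulr_ge0 => //; exact: mup_ge0.
  rewrite subr_ge0 !expr2; apply: ler_pM => //; exact: ltW.
have -> : A' + B' * (K%:R * sigma ^+ 2) = a + b * (P + (Q * (sp * q / 2)
    + Q / (2 * (sp * q)) * (K%:R * sigma ^+ 2))).
  by rewrite /A' /B'; ring.
rewrite lerD2l; apply: ler_wpM2l => //.
rewrite /P lerD2l.
exact: key.
Qed.

Variable N : nat.
Hypothesis hkN : forall n, (0 < n)%N -> n%:R ^+ 2 * gamma ^+ (N - n) <= (k n)%:R.

Definition g := Num.sqrt gamma.

Lemma g_gt0 : 0 < g.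
Proof. by rewrite sqrtr_gt0; case: hT => /andP[]. Qed.

Lemma g_sq : g ^+ 2 = gamma.
Proof. by rewrite sqr_sqrtr // gamma_ge0. Qed.

Lemma g_lt1 : g < 1.
Proof.
have := g_sq; have := g_gt0; case: hT => /andP[_ h1] _ hs g0; nra.
Qed.

Lemma en_step n : (0 < n)%N ->
  gamma ^+ (N - n) * n%:R * en n <= mup * sp * g ^+ (N - n).
Proof.
move=> n0.
set j := (N - n)%N.
have gj0 : 0 < g ^+ j by rewrite exprn_gt0 // g_gt0.
have n0' : 0 < n%:R :> R by rewrite ltr0n.
have sk : n%:R * g ^+ j <= Num.sqrt (k n)%:R.
  rewrite -(ger0_norm (ltW (mulr_gt0 n0' gj0))) -sqrtr_sqr ler_sqrt //.
  by rewrite exprMn -exprM mulnC exprM g_sq; exact: hkN.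
have sk0 : 0 < Num.sqrt (k n)%:R := lt_le_trans (mulr_gt0 n0' gj0) sk.
rewrite /en -(g_sq) -exprM mulnC exprM.
have -> : (g ^+ j) ^+ 2 * n%:R * (mup * sp / Num.sqrt (k n)%:R) =
  mup * sp * ((g ^+ j) ^+ 2 * n%:R / Num.sqrt (k n)%:R) by rewrite mulrA; ring.
apply: ler_wpM2l; first by rewrite mulr_ge0 ?mup_ge0 // ltW // sp_gt0.
rewrite ler_pdivrMr // expr2 -mulrA; apply: ler_wpM2l; first exact: ltW.
by rewrite mulrC.
Qed.

Lemma inv_bound m : forall n r, (n + m = N.+1)%N -> (0 < n)%N ->
  (N.+1)%:R * bnd D0 gamma en m n r <=
  gamma ^+ m * n%:R * r + D0 * G gamma m + mup * sp * G g m.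
Proof.
elim: m => [|m IH] n r hnm n0.
  by rewrite /= /G !big_ord0 !mulr0 !addr0 expr0 mul1r -hnm addn0.
rewrite /=.
apply: le_trans (IH n.+1 _ _ _) _; first by rewrite addSnnS.
  by [].
have hm : (N - n)%N = m by move: hnm; rewrite addnS => -[<-]; rewrite addKn.
have hs := en_step n n0; rewrite hm in hs.
have e1 := betaH_mul R n; have e2 := betaH_mul1 R n.
have -> : gamma ^+ m * n.+1%:R *
   ((1 - betaH R n) * D0 + betaH R n * gamma * r + betaH R n * en n) =
   gamma ^+ m * (n.+1%:R * (1 - betaH R n)) * D0
   + gamma ^+ m.+1 * (n.+1%:R * betaH R n) * r
   + gamma ^+ m * (n.+1%:R * betaH R n) * en n.
  by rewrite exprS; ring.
rewrite e1 e2 !G_recr.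
have : 0 <= D0 := D0_ge0.
lra.
Qed.

Lemma final_bound :
  (N.+1)%:R * bnd D0 gamma en N 1 D0 <= (D0 + 2 * mup * sp) / (1 - gamma).
Proof.
apply: le_trans (inv_bound N 1 D0 (add1n N) isT) _.
have g1 := g_lt1; have g0 := g_gt0; have gs := g_sq.
have [/andP[ga0 ga1] _] := hT.
have b1 : G gamma N.+1 <= (1 - gamma)^-1 by apply: G_bound => //; exact: ltW.
have b2 : G g N <= (1 - g)^-1 by apply: G_bound => //; exact: ltW.
have b3 : (1 - g)^-1 <= 2 / (1 - gamma).
  rewrite -gs ler_pdivlMr; last lra.
  rewrite (_ : 1 - g ^+ 2 = (1 - g) * (1 + g)); last by ring.
  rewrite mulrA mulVf ?mul1r; lra.
have D00 := D0_ge0; have mp := mup_ge0; have sp0 := sp_gt0.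
have msp : 0 <= mup * sp by rewrite mulr_ge0 // ltW.
have -> : (D0 + 2 * mup * sp) / (1 - gamma) =
  D0 * (1 - gamma)^-1 + mup * sp * (2 / (1 - gamma)) by field; lra.
have -> : gamma ^+ N * 1 * D0 + D0 * G gamma N = D0 * G gamma N.+1.
  by rewrite G_recr; ring.
apply: lerD; last by apply: ler_wpM2l => //; exact: le_trans b3.
by apply: ler_wpM2l.
Qed.

End Main.

Lemma ceil_nat_E (R : realType) (r : R) : 0 <= r ->
  ((ceil_nat r)%:R : R) = (Num.ceil r)%:~R.
Proof.
move=> r0; rewrite /ceil_nat natr_absz ger0_norm // ceil_ge0; lra.
Qed.

Lemma ceil_nat_ge (R : realType) (r : R) : 0 <= r -> r <= (ceil_nat r)%:R.
Proof. by move=> r0; rewrite ceil_nat_E // ceil_ge. Qed.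

Lemma ceil_nat_lt (R : realType) (r : R) : 0 <= r -> (ceil_nat r)%:R < r + 1.
Proof.
move=> r0; rewrite ceil_nat_E //; have := ceilB1_lt r.
rewrite intrD (_ : (-1)%:~R = -1 :> R) //; lra.
Qed.

Lemma geo_rev (R : realType) (q : R) M : 0 <= q -> q < 1 ->
  \sum_(1 <= n < M.+1) q ^+ (M - n) <= (1 - q)^-1.
Proof.
move=> q0 q1; elim: M => [|M IH].
  by rewrite big_geq // invr_ge0; lra.
rewrite big_nat_recr //= subnn expr0.
have -> : \sum_(1 <= n < M.+1) q ^+ (M.+1 - n) =
          q * \sum_(1 <= n < M.+1) q ^+ (M - n).
  rewrite mulr_sumr; apply: eq_big_nat => n /andP[_ hn].
  by rewrite subSn // exprS.
have -> : (1 - q)^-1 = q * (1 - q)^-1 + 1 by field; lra.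
by rewrite lerD2r; apply: ler_wpM2l.
Qed.

Theorem corollary2 :
  exists C : nat,
  forall (R : realType) (d : nat) (nrm : 'rV[R]_d -> R) (mu : R)
    (gamma : R) (T : 'rV[R]_d -> 'rV[R]_d) (xs : 'rV[R]_d)
    (dX : measure_display) (Xi : measurableType dX)
    (D : 'rV[R]_d -> probability Xi R) (Ttil : 'rV[R]_d -> Xi -> 'rV[R]_d)
    (sigma eps : R) (x0 : 'rV[R]_d),
  is_norm_Rd nrm ->
  (forall x, nrm x <= mu * eucl x) ->
  gamma_contraction nrm gamma T ->
  T xs = xs ->
  (forall A : set Xi, measurable A ->
     measurable_fun setT (fun t : d.-tuple R => D (rV_of_tup t) A : \bar R)) ->
  measurable_fun setT
    (fun p : d.-tuple R * Xi => tup_of_rV (Ttil (rV_of_tup p.1) p.2)) ->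
  (forall x (i : 'I_d),
     (D x).-integrable setT (fun xi => (Ttil x xi ord0 i)%:E) /\
     (\int[D x]_xi (Ttil x xi ord0 i)%:E = (T x ord0 i)%:E)%E) ->
  0 <= sigma ->
  (forall x, (\int[D x]_xi (eucl (Ttil x xi - T x) ^+ 2)%:E <= (sigma ^+ 2)%:E)%E) ->
  0 < eps ->
  let N := ceil_nat ((nrm (x0 - xs) + 2 * mu * sigma) / (eps * (1 - gamma))) in
  let beta := fun n : nat => n%:R / n.+1%:R in
  let k := fun n : nat => ceil_nat (n%:R ^+ 2 * gamma ^+ (N - n)) in
  (halpern_expect D Ttil x0 beta k (fun x => (nrm (x - xs))%:E) N 1 x0
     <= eps%:E)%E /\
  (eps * (1 - gamma) <= nrm (x0 - xs) + 2 * mu * sigma ->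
   (\sum_(1 <= n < N.+1) k n)%:R
     <= C%:R * ((nrm (x0 - xs) ^+ 2 + mu ^+ 2 * sigma ^+ 2)
                / (eps ^+ 2 * (1 - gamma) ^+ 3))).
Proof.
exists 48%N.
move=> R d nrm mu gamma T xs dX Xi D Ttil sigma eps x0 hn hmu hT hxs _ _
  hunb hs0 hvar heps N beta k.
have [/andP[ga0 ga1] _] := hT.
have u0 : 0 < 1 - gamma by lra.
have D00 : 0 <= nrm (x0 - xs) := nrm_ge0 hn _.
have hkN : forall n, (0 < n)%N -> n%:R ^+ 2 * gamma ^+ (N - n) <= (k n)%:R.
  move=> n n0; apply: ceil_nat_ge.
  by apply: mulr_ge0; [exact: sqr_ge0 | apply: exprn_ge0; lra].
have hk : forall n, (0 < n)%N -> (0 < k n)%N.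
  move=> n n0; rewrite -(ltr0n R); apply: lt_le_trans (hkN n n0).
  by apply: mulr_gt0; [rewrite exprn_gt0 // ltr0n | exact: exprn_gt0].
split.
  set D0' := nrm (x0 - xs).
  set mp := mup R mu.
  have mp0 : 0 <= mp by rewrite /mp /mup le_max lexx orbT.
  have hN1 : 0 < (N.+1)%:R :> R by rewrite ltr0n.
  have claimX : D0' + 2 * mp * sigma <= eps * ((N.+1)%:R * (1 - gamma)).
    rewrite /mp /mup; case: (leP 0 mu) => hmu0.

      have S0 : 0 <= D0' + 2 * mu * sigma.
        by apply: addr_ge0 => //; apply: mulr_ge0 => //; apply: mulr_ge0.
      have := @ceil_nat_ge R ((D0' + 2 * mu * sigma) / (eps * (1 - gamma)))
        (divr_ge0 S0 (ltW (mulr_gt0 heps u0))).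
      rewrite -/N ler_pdivrMr ?mulr_gt0 // => h.
      apply: le_trans h _; rewrite mulrC -mulrA; apply: ler_wpM2l; first lra.
      rewrite mulrC; apply: ler_wpM2r; first lra.
      by rewrite ler_nat.

    have : D0' <= 0.
      apply: le_trans (hmu _) _; rewrite mulr_le0_ge0 //; [exact: ltW|].
      exact: eucl_ge0.
    move=> h; rewrite mulr0 mul0r addr0; apply: le_trans h _.
    by apply: mulr_ge0; [exact: ltW | apply: mulr_ge0 => //; exact: ltW].
  have key : forall sp, sigma < sp ->
    (halpern_expect D Ttil x0 beta k (fun x => (nrm (x - xs))%:E) N 1 x0
     <= ((D0' + 2 * mp * sp) / ((N.+1)%:R * (1 - gamma)))%:E)%E.
    move=> sp hsp.
    apply: le_trans (@main_bound R d nrm mu gamma T xs dX Xi D Ttil sigma x0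
      hn hmu hT hxs hunb hs0 hvar k hk sp hsp N 1 x0 isT) _.
    rewrite lee_fin.
    have := @final_bound R d nrm mu gamma T xs sigma x0 hn hT hs0 k sp hsp N hkN.
    rewrite -/D0' -/mp => h.
    have n1 : (N.+1)%:R != 0 :> R by rewrite pnatr_eq0.
    have u1 : 1 - gamma != 0 := lt0r_neq0 u0.
    rewrite (_ : (D0' + 2 * mp * sp) / ((N.+1)%:R * (1 - gamma)) =
      ((D0' + 2 * mp * sp) / (1 - gamma)) / (N.+1)%:R); last first.
      by field; rewrite u1 andbT nat1r.
    by rewrite ler_pdivlMr // mulrC.
  apply/lee_addgt0Pr => e e0.
  pose sp := sigma + e * (1 - gamma) / (2 * mp + 1).
  have hsp : sigma < sp.
    by rewrite /sp ltrDl divr_gt0 // ?mulr_gt0 //; lra.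
  apply: le_trans (key sp hsp) _.
  rewrite lee_fin ler_pdivrMr ?mulr_gt0 //.
  have h2 : 2 * mp * (e * (1 - gamma) / (2 * mp + 1)) <= e * (1 - gamma).
    have -> : 2 * mp * (e * (1 - gamma) / (2 * mp + 1)) =
      e * (1 - gamma) * (2 * mp / (2 * mp + 1)) by ring.
    apply: ler_piMr; first by apply: mulr_ge0; lra.
    by rewrite ler_pdivrMr; lra.
  have h3 : e * (1 - gamma) <= e * ((N.+1)%:R * (1 - gamma)).
    apply: ler_wpM2l; first lra.
    rewrite ler_peMl ?ler1n //; lra.
  rewrite /sp (mulrDr (2 * mp)) addrA (mulrDl eps e).
  by apply: lerD; [exact: claimX|exact: le_trans h2 h3].
move=> hX.
set D0' := nrm (x0 - xs) in hX *.
set S := D0' + 2 * mu * sigma in hX *.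
have epu : 0 < eps * (1 - gamma) by apply: mulr_gt0.
set X := S / (eps * (1 - gamma)).
have X1 : 1 <= X by rewrite /X ler_pdivlMr // mul1r.
have NX : (N%:R : R) <= 2 * X.
  have := @ceil_nat_lt R X (le_trans ler01 X1); rewrite -/N; lra.
have N0 : 0 <= (N%:R : R) by [].
rewrite natr_sum.
have hs1 : \sum_(1 <= n < N.+1) ((k n)%:R : R) <=
           \sum_(1 <= n < N.+1) (N%:R ^+ 2 * gamma ^+ (N - n) + 1).
  apply: ler_sum_nat => n /andP[n1 nN].
  have g0 : 0 <= gamma ^+ (N - n) by apply: exprn_ge0; lra.
  have := @ceil_nat_lt R (n%:R ^+ 2 * gamma ^+ (N - n))
    (mulr_ge0 (sqr_ge0 _) g0).
  rewrite /k => h; apply: le_trans (ltW h) _; rewrite lerD2r.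
  apply: ler_wpM2r => //; rewrite !expr2; apply: ler_pM => //.
    by rewrite ler_nat -ltnS.
  by rewrite ler_nat -ltnS.
rewrite big_split /= -mulr_sumr sumr_const_nat subn1 /= in hs1.
have hg := @geo_rev R gamma N (ltW ga0) ga1.
have hu1 : 0 < (1 - gamma)^-1 by rewrite invr_gt0.
apply: le_trans hs1 _.
have e1 : N%:R ^+ 2 * \sum_(1 <= i < N.+1) gamma ^+ (N - i) + 1 *+ N
     <= 6 * X ^+ 2 / (1 - gamma).
  have a1 : N%:R ^+ 2 * \sum_(1 <= i < N.+1) gamma ^+ (N - i)
      <= 4 * X ^+ 2 / (1 - gamma).
    apply: le_trans (ler_wpM2l (sqr_ge0 _) hg) _.
    apply: ler_wpM2r; first exact: ltW.
    rewrite (_ : 4 * X ^+ 2 = (2 * X) ^+ 2); last by ring.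
    by rewrite !expr2; apply: ler_pM.
  have a2 : (1 *+ N : R) <= 2 * X ^+ 2 / (1 - gamma).
    rewrite ler_pdivlMr // -/(N%:R).
    have : N%:R * (1 - gamma) <= N%:R :> R by rewrite ler_piMr //; lra.
    have : X <= X ^+ 2 by rewrite expr2 ler_peMl //; lra.
    lra.
  have -> : 6 * X ^+ 2 / (1 - gamma) =
    4 * X ^+ 2 / (1 - gamma) + 2 * X ^+ 2 / (1 - gamma) by ring.
  exact: lerD.
apply: le_trans e1 _.
have u1 : 1 - gamma != 0 := lt0r_neq0 u0.
have e2 : 6 * X ^+ 2 / (1 - gamma) =
   6 * S ^+ 2 / (eps ^+ 2 * (1 - gamma) ^+ 3).
  by rewrite /X; field; rewrite u1 (lt0r_neq0 heps).
rewrite e2.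
have e3 : S ^+ 2 <= 8 * (D0' ^+ 2 + mu ^+ 2 * sigma ^+ 2).
  rewrite -subr_ge0.
  have -> : 8 * (D0' ^+ 2 + mu ^+ 2 * sigma ^+ 2) - S ^+ 2 =
    (D0' - 2 * (mu * sigma)) ^+ 2 + 6 * D0' ^+ 2 by rewrite /S; ring.
  by apply: addr_ge0; [exact: sqr_ge0 | apply: mulr_ge0 => //; exact: sqr_ge0].
have w0 : 0 <= (eps ^+ 2 * (1 - gamma) ^+ 3)^-1.
  by rewrite invr_ge0; apply: mulr_ge0; [exact: sqr_ge0|apply: exprn_ge0; lra].
rewrite (_ : 48%:R * ((D0' ^+ 2 + mu ^+ 2 * sigma ^+ 2) /
   (eps ^+ 2 * (1 - gamma) ^+ 3)) =
   6 * (8 * (D0' ^+ 2 + mu ^+ 2 * sigma ^+ 2)) / (eps ^+ 2 * (1 - gamma) ^+ 3));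
  last by ring.
apply: ler_wpM2r => //; apply: ler_wpM2l => //.
Qed.
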